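(* Let $n\ge2$, $m\ge1$, and let $C$ be an $n$-copula, with $C_m=\mathscr{B}^n_m(C)$. On a probability space $(\Omega,P)$ let $(X_1,\ldots,X_n)$ be a random vector with joint distribution function $C$ (so each $X_r$ is uniform on $I$), and let $X_r^j$ ($r=1,\ldots,n$, $j=1,\ldots,m$) be i.i.d. uniform random variables on $I$, independent of $(X_1,\ldots,X_n)$. For each $r$ let $X_r^{(1)}<\cdots<X_r^{(m)}$ be the order statistics of $X_r^1,\ldots,X_r^m$ (a.s. distinct). For a multi-index $k=(k_1,\ldots,k_n)\in\{1,\ldots,m\}^n$ let $E_k$ be the event $\{\tfrac{k_r-1}{m}<X_r<\tfrac{k_r}{m}\text{ for all }r=1,\ldots,n\}$; these events are disjoint and their union has probability $1$. Define, almost surely, $Y_r=\sum_{k\in\{1,\ldots,m\}^n}\mathbf 1_{E_k}\,X_r^{(k_r)}$ for $r=1,\ldots,n$ (i.e. on $E_k$, $Y_r=X_r^{(k_r)}$). Then for all $(x_1,\ldots,x_n)\in I^n$, $$C_m(x_1,\ldots,x_n)=P(Y_1<x_1,\ldots,Y_n<x_n).$$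
   Context: $I=[0,1]$. An $n$-copula is a function $C:I^n\to I$ that is the joint distribution function of a random vector whose marginals are uniform on $I$ (equivalently: grounded, with uniform margins $C(1,\ldots,x_k,\ldots,1)=x_k$, and $n$-increasing). $b_{i,m}(t)=\binom{m}{i}t^i(1-t)^{m-i}$ and $\mathscr{B}^n_m(C)(x_1,\ldots,x_n)=\sum_{i_1,\ldots,i_n=0}^m C(\tfrac{i_1}{m},\ldots,\tfrac{i_n}{m})\,b_{i_1,m}(x_1)\cdots b_{i_n,m}(x_n)$. *)

(* Defs.v *)
From HB Require Import structures.
From mathcomp Require Import all_boot all_order all_algebra.
From mathcomp Require Import all_classical all_reals all_analysis.
Set Implicit Arguments. Unset Strict Implicit. Unset Printing Implicit Defensive.
Import Order.TTheory GRing.Theory Num.Theory.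
Local Open Scope classical_set_scope.
Local Open Scope ring_scope.

Section Defs.
Variable R : realType.

Definition in_unit_cube n (x : 'I_n -> R) : Prop := forall r, 0 <= x r <= 1.

(* n-copula as in the context: grounded, uniform margins, n-increasing
   (C-volume of every box in I^n is nonnegative). *)
Definition is_copula n (C : ('I_n -> R) -> R) : Prop :=
  [/\ (forall x, in_unit_cube x -> 0 <= C x <= 1),
      (forall x, in_unit_cube x -> (exists k, x k = 0) -> C x = 0),
      (forall (k : 'I_n) (t : R), 0 <= t <= 1 ->
          C (fun r => if r == k then t else 1) = t) &
      (forall a b : 'I_n -> R, in_unit_cube a -> in_unit_cube b ->
          (forall r, a r <= b r) ->
          0 <= \sum_(S : {set 'I_n})
                 (-1) ^+ (n - #|S|) * C (fun r => if r \in S then b r else a r))].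

Definition bern (m i : nat) (t : R) : R :=
  ('C(m, i))%:R * t ^+ i * (1 - t) ^+ (m - i).

Definition bernstein_copula n m (C : ('I_n -> R) -> R) (x : 'I_n -> R) : R :=
  \sum_(i : {ffun 'I_n -> 'I_m.+1})
     C (fun r => (i r)%:R / m%:R) * \prod_(r < n) bern m (i r) (x r).

(* order statistic: [order_stat v k] is the (k+1)-th smallest of the
   values v 0, ..., v (m-1)  (k : 'I_m, 0-based) *)
Definition order_stat m (v : 'I_m -> R) (k : 'I_m) : R :=
  nth 0 (sort <=%R [seq v j | j <- enum 'I_m]) k.

End Defs.

(* Main.v *)
Require Import Defs.
From HB Require Import structures.
From mathcomp Require Import all_boot all_order all_algebra.
From mathcomp Require Import all_classical all_reals all_analysis.
From mathcomp Require Import lra.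
Import Order.TTheory GRing.Theory Num.Theory.
Local Open Scope classical_set_scope.
Local Open Scope ring_scope.
Set Implicit Arguments. Unset Strict Implicit. Unset Printing Implicit Defensive.

Section OS.
Variable R : realType.

Lemma nth_sort_lt (s : seq R) (k : nat) (t : R) : (k < size s)%N ->
  (nth 0 (sort <=%R s) k < t) = (k < count (fun y : R => (y < t)%R) s)%N.
Proof.
move=> ks.
set s' := sort <=%R s.
have ss : sorted <=%R s' by apply: sort_sorted; exact: le_total.
have sz : size s' = size s by rewrite size_sort.
have -> : count (fun y => y < t) s = count (fun y => y < t) s'.
  by apply/permP; rewrite perm_sym perm_sort.
have hle : forall i j, (i <= j)%N -> (j < size s')%N -> nth 0 s' i <= nth 0 s' j.
  move=> i j ij js; apply: (sorted_leq_nth le_trans lexx) => //.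
  - exact: leq_ltn_trans ij js.
case: (ltP (nth 0 s' k) t) => hk.
  rewrite -[in RHS](cat_take_drop k.+1 s') count_cat.
  apply/esym; apply: (leq_trans _ (leq_addr _ _)).
  have : all (fun y => y < t) (take k.+1 s').
    apply/(all_nthP 0) => i; rewrite size_takel ?sz // => hi.
    rewrite nth_take //; apply: le_lt_trans hk; apply: hle; rewrite ?sz //.
  by rewrite all_count => /eqP ->; rewrite size_takel ?sz.
rewrite -[in RHS](cat_take_drop k s') count_cat.
have -> : count (fun y => y < t) (drop k s') = 0%N.
  apply/eqP; rewrite -leqn0 leqNgt -has_count; apply/(has_nthP 0) => -[i].
  rewrite size_drop => hi; rewrite nth_drop; apply/negP; rewrite -leNgt.
  by apply: le_trans hk _; apply: hle; rewrite ?leq_addr // -ltn_subRL.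
apply/esym/negbTE; rewrite -leqNgt addn0.
by apply: leq_trans (count_size _ _) _; rewrite size_take; case: ltnP.
Qed.

Lemma order_stat_lt m (v : 'I_m -> R) (k : 'I_m) (t : R) :
  (order_stat v k < t) = (k < #|[set j | (v j < t)%R]%SET|)%N.
Proof.
rewrite /order_stat nth_sort_lt; last by rewrite size_map size_enum_ord.
by rewrite count_map -sum1dep_card sum1_count enumT.
Qed.
End OS.

Section MH.
Context d (T : measurableType d) (R : realType) (P : probability T R).

Lemma meas_forall (I : finType) (F : I -> set T) :
  (forall i, measurable (F i)) -> measurable [set w | forall i, F i w].
Proof.
move=> mF.
have -> : [set w | forall i, F i w] = \bigcap_(i in setT) F i.
  by apply/seteqP; split => w /= h i //; apply: h.
by apply: fin_bigcap_measurable => //; exact: finite_finset.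
Qed.

Lemma meas_exists (I : finType) (F : I -> set T) :
  (forall i, measurable (F i)) -> measurable [set w | exists i, F i w].
Proof.
move=> mF.
have -> : [set w | exists i, F i w] = \bigcup_(i in setT) F i.
  by apply/seteqP; split => w /= [i h]; [exists i | exists i].
by apply: fin_bigcup_measurable => //; exact: finite_finset.
Qed.

Lemma disj_bigU (I : eqType) (s : seq I) (F : I -> set T) a :
  a \notin s -> (forall i j, i != j -> F i `&` F j = set0) ->
  F a `&` \big[setU/set0]_(i <- s) F i = set0.
Proof.
elim: s => [|b s IH]; first by rewrite big_nil setI0.
rewrite in_cons negb_or => /andP[ab as'] hd.
by rewrite big_cons setIUr hd // IH // setU0.
Qed.

Lemma meas_bigU (I : eqType) (s : seq I) (F : I -> set T) :
  uniq s -> (forall i, measurable (F i)) ->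
  (forall i j, i != j -> F i `&` F j = set0) ->
  P (\big[setU/set0]_(i <- s) F i) = (\sum_(i <- s) P (F i))%E.
Proof.
elim: s => [|a s IH]; first by rewrite !big_nil measure0.
move=> /= /andP[as' us] mF hd.
rewrite !big_cons measureU //.
- by congr (_ + _)%E; exact: IH.
- exact: bigsetU_measurable.
- exact: disj_bigU.
Qed.

Lemma negl_big (I : Type) (s : seq I) (F : I -> set T) :
  (forall i, P.-negligible (F i)) -> P.-negligible (\big[setU/set0]_(i <- s) F i).
Proof.
move=> h; elim/big_ind: _ => //; [exact: negligible_set0|exact: negligibleU].
Qed.

Lemma meas_eq_null (A B N : set T) : measurable A -> measurable B ->
  P.-negligible N -> A `<=` B `|` N -> B `<=` A `|` N -> P A = P B.
Proof.
move=> mA mB nN AB BA.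
rewrite (measureDI P mA mB) (measureDI P mB mA).
have h1 := proj1 (negligibleP P (measurableD mA mB))
  (negligibleS (fun w (h : (A `\` B) w) => match AB w h.1 with
     | or_introl hb => False_ind _ (h.2 hb) | or_intror hn => hn end) nN).
have h2 := proj1 (negligibleP P (measurableD mB mA))
  (negligibleS (fun w (h : (B `\` A) w) => match BA w h.1 with
     | or_introl hb => False_ind _ (h.2 hb) | or_intror hn => hn end) nN).
by rewrite h1 h2 !add0e setIC.
Qed.

Lemma pfin A : measurable A -> (P A < +oo)%E.
Proof. by move=> mA; apply: (le_lt_trans (probability_le1 P mA)); rewrite ltry. Qed.

Lemma pmeasureD A B : measurable A -> measurable B ->
  P (A `\` B) = (P A - P (A `&` B))%E.
Proof. by move=> mA mB; apply: measureD => //; exact: pfin. Qed.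

Lemma pnegP A : measurable A -> P.-negligible A <-> P A = 0%E.
Proof. by move=> mA; exact: negligibleP. Qed.

Lemma ple A B : measurable A -> measurable B -> A `<=` B -> (P A <= P B)%E.
Proof. by move=> mA mB AB; apply: le_measure => //; rewrite inE. Qed.

Lemma pU A B : measurable A -> measurable B -> A `&` B = set0 ->
  P (A `|` B) = (P A + P B)%E.
Proof. by move=> mA mB AB; apply: measureU. Qed.

Lemma pfine A : measurable A -> P A = (fine (P A))%:E.
Proof.
move=> mA; rewrite fineK // ge0_fin_numE ?measure_ge0 //; exact: pfin.
Qed.

End MH.

Section Reals.
Variables (R : realType) (m : nat).
Hypothesis hm : (0 < m)%N.

Definition gr (k : nat) : R := k%:R / m%:R.

Lemma m_gt0 : 0 < m%:R :> R. Proof. by rewrite ltr0n. Qed.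

Lemma gr_lt k k' : (gr k < gr k') = (k < k')%N.
Proof. by rewrite /gr ltr_pM2r ?invr_gt0 ?m_gt0 // ltr_nat. Qed.

Lemma gr_le k k' : (gr k <= gr k') = (k <= k')%N.
Proof. by rewrite /gr ler_pM2r ?invr_gt0 ?m_gt0 // ler_nat. Qed.

Lemma gr0 : gr 0 = 0. Proof. by rewrite /gr mul0r. Qed.
Lemma grm : gr m = 1. Proof. by rewrite /gr divff // gt_eqF // m_gt0. Qed.

Lemma gr_ge0 k : 0 <= gr k. Proof. by rewrite -gr0 gr_le. Qed.
Lemma gr_le1 k : (k <= m)%N -> gr k <= 1. Proof. by rewrite -grm gr_le. Qed.

Definition Bad (t : R) : Prop :=
  t <= 0 \/ 1 < t \/ exists j : 'I_m.+1, t = gr j.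

Lemma floor_ex t : ~ Bad t -> exists k : 'I_m, gr k < t < gr k.+1.
Proof.
move=> nb.
have t0 : 0 < t by rewrite ltNge; apply/negP => h; apply: nb; left.
have t1 : t <= 1 by rewrite leNgt; apply/negP => h; apply: nb; right; left.
have tm0 : 0 <= t * m%:R by rewrite mulr_ge0 // ltW.
have /andP[k1 k2] := truncn_itv tm0.
set k := Num.Def.trunc (t * m%:R) in k1 k2.
have km : (k <= m)%N.
  by rewrite -(ler_nat R); apply: le_trans k1 _; rewrite ler_piMl // ltW // m_gt0.
have gkt : gr k <= t by rewrite /gr ler_pdivrMr ?m_gt0.
have tgk : t < gr k.+1 by rewrite /gr ltr_pdivlMr ?m_gt0.
have gkt' : gr k < t.
  rewrite lt_neqAle gkt andbT; apply/negP => /eqP h; apply: nb; right; right.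
  by exists (Ordinal (km : (k < m.+1)%N)).
have kltm : (k < m)%N.
  rewrite ltn_neqAle km andbT; apply/negP => /eqP hk.
  by move: gkt'; rewrite hk grm => /(le_lt_trans t1); rewrite ltxx.
by exists (Ordinal kltm); rewrite gkt' tgk.
Qed.

Lemma int_uniq t k k' : gr k < t < gr k.+1 -> gr k' < t < gr k'.+1 -> k = k'.
Proof.
move=> /andP[a b] /andP[c e]; apply/eqP; rewrite eqn_leq.
have := lt_trans a e; have := lt_trans c b; rewrite !gr_lt !ltnS => -> -> //.
Qed.

End Reals.

Section Unif.
Variable R : realType.

Lemma unif_lt (x : R) : 0 <= x <= 1 ->
  uniform_prob (@ltr01 R) `]-oo, x[ = x%:E.
Proof.
move=> /andP[x0 x1].
rewrite /uniform_prob integral_uniform_pdf.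
have -> : `]-oo, x[ `&` `[0, 1] = `[0, x[%classic :> set R.
  apply/seteqP; split => y /=; rewrite !in_itv /=.
    by move=> [-> /andP[-> _]].
  by move=> /andP[y0 yx]; split => //; rewrite y0 (le_trans (ltW yx)).
rewrite (eq_integral (cst 1%:E)); last first.
  move=> y; rewrite inE /= in_itv /= => /andP[y0 yx].
  by rewrite /uniform_pdf y0 (le_trans (ltW yx)) // subr0 invr1.
rewrite integral_cst //= mul1e lebesgue_measure_itv /= lte_fin.
case: ltP => h; first by rewrite oppr0 adde0.
by have -> : x = 0 by apply/eqP; rewrite eq_le h x0.
Qed.

Lemma unif_ge (x : R) : 0 <= x <= 1 ->
  uniform_prob (@ltr01 R) `[x, +oo[ = (1 - x)%:E.
Proof.
move=> hx.
have -> : `[x, +oo[%classic = ~` `]-oo, x[%classic :> set R.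
  apply/seteqP; split => y /=; rewrite !in_itv /= andbT.
    by move=> h; apply/negP; rewrite -leNgt.
  by move/negP; rewrite -leNgt.
rewrite probability_setC // (_ : (1 - x)%:E = 1 - x%:E)%E //; congr (_ - _)%E; exact: unif_lt hx.
Qed.
End Unif.

Section Comb.
Variables (R : realType) (n m : nat).

Lemma prod_if (A : {set 'I_m}) (a b : R) :
  \prod_(j < m) (if j \in A then a else b) = a ^+ #|A| * b ^+ (m - #|A|).
Proof.
rewrite (bigID (mem A)) /=; congr (_ * _).
  rewrite (eq_bigr (fun=> a)); last by move=> j ->.
  by rewrite prodr_const.
rewrite (eq_bigr (fun=> b)); last by move=> j hj; rewrite (negbTE hj).
rewrite prodr_const; congr (_ ^+ _).
apply: (@addnI #|A|); rewrite subnKC; last by apply: leq_trans (max_card _) _; rewrite card_ord.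
transitivity #|'I_m|; last exact: card_ord.
rewrite -(cardC (mem A)); congr (_ + _); exact: eq_card.
Qed.

Definition szS (S : {ffun 'I_n -> {set 'I_m}}) : {ffun 'I_n -> 'I_m.+1} :=
  [ffun r => inord #|S r|].

Lemma szSE S r : (szS S r : nat) = #|S r|.
Proof.
rewrite ffunE inordK // ltnS; apply: leq_trans (max_card _) _; by rewrite card_ord.
Qed.

Lemma sum_sz (F : {ffun 'I_n -> 'I_m.+1} -> R) :
  \sum_(S <- enum {ffun 'I_n -> {set 'I_m}}) F (szS S) =
  \sum_(i : {ffun 'I_n -> 'I_m.+1}) F i * \prod_(r < n) ('C(m, i r))%:R.
Proof.
rewrite big_enum /=.
rewrite (partition_big szS predT) //=.
apply: eq_bigr => i _.
rewrite (eq_bigr (fun=> F i)); last by move=> S /eqP ->.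
rewrite sumr_const -mulr_natr; congr (_ * _).
rewrite -natr_prod; congr (_%:R).
have -> : #|[pred S | szS S == i]| =
   #|family (fun r => [pred A : {set 'I_m} | #|A| == i r])|.
  apply: eq_card => S; rewrite inE; apply/eqP/familyP => [<- r|h].
    by rewrite inE szSE.
  apply/ffunP => r; apply/val_inj => /=; rewrite szSE; have := h r; rewrite inE => /eqP.
  done.
rewrite card_family foldrE big_map big_enum /=.
apply: eq_bigr => r _.
by rewrite -cardsE card_draws card_ord.
Qed.

End Comb.

Lemma mem_bigU (T : Type) (I : eqType) (s : seq I) (F : I -> set T) i w :
  i \in s -> F i w -> (\big[setU/set0]_(j <- s) F j) w.
Proof.
elim: s => [//|a s IH]; rewrite in_cons big_cons => /orP[/eqP <- h|h h']; first by left.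
by right; apply: IH.
Qed.

Lemma bigU_mem (T : Type) (I : eqType) (s : seq I) (F : I -> set T) w :
  (\big[setU/set0]_(j <- s) F j) w -> exists2 i, i \in s & F i w.
Proof.
elim: s => [|a s IH]; first by rewrite big_nil.
rewrite big_cons => -[h|/IH [i hi h]]; first by exists a; rewrite ?mem_head.
by exists i => //; rewrite in_cons hi orbT.
Qed.

Section Main.
Variables (R : realType) (n m : nat) (C : ('I_n -> R) -> R)
  (d : measure_display) (T : measurableType d) (P : probability T R)
  (X : 'I_n -> {RV P >-> R}) (Xs : 'I_n -> 'I_m -> {RV P >-> R}).
Hypothesis hn : (2 <= n)%N.
Hypothesis hm : (1 <= m)%N.
Hypothesis hC : is_copula C.
Hypothesis hX : forall x : 'I_n -> R, in_unit_cube x ->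
     P [set w | forall r, X r w <= x r] = (C x)%:E.

Lemma meas_le (f : {RV P >-> R}) c : measurable [set w | f w <= c].
Proof.
have -> : [set w | f w <= c] = f @^-1` `]-oo, c] by apply/seteqP; split => w /=; rewrite in_itv.
exact: measurable_funPTI.
Qed.
Lemma meas_lt (f : {RV P >-> R}) c : measurable [set w | f w < c].
Proof.
have -> : [set w | f w < c] = f @^-1` `]-oo, c[ by apply/seteqP; split => w /=; rewrite in_itv.
exact: measurable_funPTI.
Qed.
Lemma meas_ge (f : {RV P >-> R}) c : measurable [set w | c <= f w].
Proof.
have -> : [set w | c <= f w] = f @^-1` `[c, +oo[ by apply/seteqP; split => w /=; rewrite in_itv /= andbT.
exact: measurable_funPTI.
Qed.
Lemma meas_gt (f : {RV P >-> R}) c : measurable [set w | c < f w].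
Proof.
have -> : [set w | c < f w] = f @^-1` `]c, +oo[ by apply/seteqP; split => w /=; rewrite in_itv /= andbT.
exact: measurable_funPTI.
Qed.

Definition r0 : 'I_n := Ordinal (leq_trans (isT : (0 < 2)%N) hn).

Lemma all_le1 : P [set w | forall r, X r w <= 1] = 1%:E.
Proof.
rewrite (@hX (fun=> 1)); last by move=> r; rewrite ler01 lexx.
case: hC => _ _ hmarg _.
have := hmarg r0 1; rewrite ler01 lexx => /(_ isT).
under eq_fun do rewrite if_same. by move=> ->.
Qed.

Definition Out := [set w | exists r, 1 < X r w].

Lemma Out_null : P.-negligible Out.
Proof.
have mA : measurable [set w | forall r, X r w <= 1] by apply: meas_forall => r; exact: meas_le.
have -> : Out = ~` [set w | forall r, X r w <= 1].
  apply/seteqP; split => w /=.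
    by move=> [r hr] h; move: (h r); rewrite leNgt hr.
  move=> h; apply: contrapT => h'; apply: h => r; rewrite leNgt; apply/negP => hr.
  by apply: h'; exists r.
apply/negligibleP; first exact: measurableC.
by have := probability_setC P mA; rewrite all_le1 subee.
Qed.

Lemma marg r (t : R) : 0 <= t <= 1 -> P [set w | X r w <= t] = t%:E.
Proof.
move=> ht.
case: hC => _ _ hmarg _.
set e := fun s : 'I_n => if s == r then t else 1.
have ecube : in_unit_cube e.
  by move=> s; rewrite /e; case: ifP => _ //; rewrite ler01 lexx.
rewrite -{2}(hmarg r t ht) -/e -(hX ecube).
apply: (@meas_eq_null _ _ _ P _ _ Out).
- exact: meas_le.
- by apply: meas_forall => s; exact: meas_le.
- exact: Out_null.
- move=> w /= hw.
  have [hall|hout] := pselect (forall s, X s w <= 1).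
    by left => s; rewrite /e; case: eqP => [->|_] //; exact: hall.
  right; apply: contrapT => h; apply: hout => s; rewrite leNgt; apply/negP => hs.
  by apply: h; exists s.
- by move=> w /= h; left; have := h r; rewrite /e eqxx.
Qed.

Lemma pt_null r c : P.-negligible [set w | X r w = c].
Proof.
have mA : measurable [set w | X r w = c].
  have -> : [set w | X r w = c] = [set w | X r w <= c] `&` [set w | c <= X r w].
    by apply/seteqP; split => w /=; [move=> ->; rewrite lexx | move=> [h1 h2]; apply/eqP; rewrite eq_le h1 h2].
  by apply: measurableI; [exact: meas_le | exact: meas_ge].
have [c0|c0] := leP c 0.
  apply: (negligibleS (A := [set w | X r w <= 0])).
    by move=> w /= ->.
  by apply/(pnegP P (meas_le _ _)); rewrite marg // lexx ler01.
have [c1|c1] := ltP 1 c.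
  apply: (negligibleS (A := Out)); last exact: Out_null.
  by move=> w /= h; exists r; rewrite h.
apply/(pnegP P mA).
have key : forall eps, 0 < eps <= c -> (P [set w | X r w = c] <= eps%:E)%E.
  move=> eps /andP[e0 ec].
  have ce : 0 <= c - eps <= 1.
    by rewrite subr_ge0 ec /= (le_trans _ c1) // lerBlDr lerDl ltW.
  have mB : measurable [set w | X r w <= c - eps] by exact: meas_le.
  have mD : measurable [set w | X r w <= c] by exact: meas_le.
  apply: (le_trans (ple P mA (measurableD mD mB) _)).
    move=> w /= ->; split => //; rewrite lerBrDr => h.
    by move: h; rewrite leNgt ltrDl e0.
  rewrite pmeasureD //.
  have -> : [set w | X r w <= c] `&` [set w | X r w <= c - eps] = [set w | X r w <= c - eps].
    apply/seteqP; split => w /=; first by case.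
    move=> h; split => //; apply: le_trans h _; rewrite lerBlDr lerDl ltW //.
  rewrite !marg //; last by rewrite (ltW c0) c1.
  by rewrite -EFinB opprB addrC subrK.
rewrite (pfine P mA); congr (_%:E).
have p0 : 0 <= fine (P [set w | X r w = c]) by apply: fine_ge0; exact: measure_ge0.
apply/eqP; rewrite eq_le p0 andbT; apply/negP => /negP; rewrite -ltNge => pp.
set p := fine _ in p0 pp.
have hm0 : 0 < Order.min (p / 2) c by rewrite lt_min c0 andbT divr_gt0.
have hmc : Order.min (p / 2) c <= c by rewrite ge_min lexx orbT.
have := key (Order.min (p / 2) c); rewrite hm0 hmc.
rewrite (pfine P mA) lee_fin => /(_ isT) h.
have : p <= p / 2 by apply: le_trans h _; rewrite ge_min lexx.
rewrite ler_pdivlMr // ger_pMr //; lra.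
Qed.

Local Notation g := (gr R m).

Definition Nl := [set w | exists r, Bad m (X r w)].

Lemma Nl_null : P.-negligible Nl.
Proof.
pose Z r := [set w | X r w <= 0] `|` Out `|`
   \big[setU/set0]_(j <- enum 'I_m.+1) [set w | X r w = g j].
apply: (negligibleS (A := \big[setU/set0]_(r <- enum 'I_n) Z r)).
  move=> w [r hb]; apply: (mem_bigU (i := r)); first by rewrite mem_enum.
  case: hb => [h|[h|[j h]]].
  - by left; left.
  - by left; right; exists r.
  - by right; apply: (mem_bigU (i := j)); first rewrite mem_enum.
apply: negl_big => r; apply: negligibleU; first apply: negligibleU.
- apply/(pnegP P (meas_le _ _)); rewrite marg //; lra.
- exact: Out_null.
- by apply: negl_big => j; exact: pt_null.
Qed.

Definition Ek (k : {ffun 'I_n -> 'I_m}) :=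
  [set w | forall r, (k r)%:R / m%:R < X r w < (k r).+1%:R / m%:R].

Definition Yr (r : 'I_n) (w : T) :=
  \sum_(k : {ffun 'I_n -> 'I_m})
      (\1_(Ek k) w) * order_stat (fun j => Xs r j w) (k r).

Lemma Ek_uniq k k' w : Ek k w -> Ek k' w -> k = k'.
Proof.
move=> h h'; apply/ffunP => r; apply/val_inj.
exact: (int_uniq hm (h r) (h' r)).
Qed.

Lemma Yr_on k r w : Ek k w -> Yr r w = order_stat (fun j => Xs r j w) (k r).
Proof.
move=> hk; rewrite /Yr (bigD1 k) //= big1 ?addr0.
  by rewrite indicE mem_set // mul1r.
move=> k' nk; rewrite indicE memNset ?mul0r //.
by move=> h'; move/eqP: nk; apply; exact: (Ek_uniq h' hk).
Qed.

Lemma Yr_off r w : ~ (exists k, Ek k w) -> Yr r w = 0.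
Proof.
move=> nk; rewrite /Yr big1 // => k _.
by rewrite indicE memNset ?mul0r // => h; apply: nk; exists k.
Qed.

Lemma Gd_full w : ~ Nl w -> exists k, Ek k w.
Proof.
move=> hw.
have : forall r, exists kr : 'I_m, g kr < X r w < g kr.+1.
  by move=> r; apply: floor_ex => // hb; apply: hw; exists r.
by move/fin_all_exists => [f hf]; exists [ffun r => f r] => r; rewrite ffunE; exact: hf.
Qed.

Variable x : 'I_n -> R.
Hypothesis hx : in_unit_cube x.

Definition cnt w r : {set 'I_m} := [set j | (Xs r j w < x r)%R]%SET.
Definition AS (S : {ffun 'I_n -> {set 'I_m}}) r : set R :=
  [set t | exists k : 'I_m, (k < #|S r|)%N /\ g k < t < g k.+1].
Definition BS (S : {ffun 'I_n -> {set 'I_m}}) r j : set R :=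
  if j \in S r then `]-oo, x r[%classic else `[x r, +oo[%classic.
Definition HS S := [set w | forall r, AS S r (X r w)] `&`
                   [set w | forall r j, BS S r j (Xs r j w)].

Lemma BS_iff S r j w : BS S r j (Xs r j w) <-> (j \in S r) = (Xs r j w < x r).
Proof.
rewrite /BS; case: (j \in S r); rewrite /= in_itv /=; first by split => [->|<-].
by rewrite andbT leNgt; split => [/negbTE ->|h]; last rewrite -h.
Qed.

Lemma HS_cnt S w : [set w | forall r j, BS S r j (Xs r j w)] w -> forall r, S r = cnt w r.
Proof.
move=> h r; apply/setP => j; rewrite /cnt inE.
by apply/BS_iff; exact: h.
Qed.

Lemma meas_AS S r : measurable (AS S r).
Proof.
apply: meas_exists => k.
case: (k < #|S r|)%N.
  have e : [set t : R | true /\ g k < t < g k.+1] = `]g k, g k.+1[%classic.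
    by apply/seteqP; split => t /=; rewrite in_itv /=; [case|split].
  have := measurable_itv `]g k, g k.+1[; rewrite -e; move=> h; exact: h.
have e : [set t : R | false /\ g k < t < g k.+1] = set0.
  by apply/seteqP; split => t //= [].
have := @measurable0 _ R; rewrite -e; move=> h; exact: h.
Qed.

Lemma meas_BS S r j : measurable (BS S r j).
Proof. by rewrite /BS; case: ifP => _; exact: measurable_itv. Qed.

Lemma meas_XA S : measurable [set w | forall r, AS S r (X r w)].
Proof. apply: meas_forall => r; exact: (measurable_funPTI (X r) (meas_AS S r)). Qed.

Lemma meas_XB S : measurable [set w | forall r j, BS S r j (Xs r j w)].
Proof.
apply: meas_forall => r; apply: meas_forall => j.
exact: (measurable_funPTI (Xs r j) (meas_BS S r j)).
Qed.

Lemma meas_HS S : measurable (HS S).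
Proof. exact: measurableI (meas_XA S) (meas_XB S). Qed.

Lemma HS_disj S S' : S != S' -> HS S `&` HS S' = set0.
Proof.
move=> nS; apply/seteqP; split => w // [[_ h] [_ h']].
move/eqP: nS; apply; apply/ffunP => r.
by rewrite (HS_cnt h) (HS_cnt h').
Qed.

Lemma HS_Ek S w : HS S w -> exists k, Ek k w /\ forall r, (k r < #|S r|)%N.
Proof.
move=> [hA _].
have /fin_all_exists [f hf] := hA.
exists [ffun r => f r]; split => r; rewrite ffunE; first by case: (hf r) => _.
by case: (hf r).
Qed.

Definition Gd := [set w | exists k, Ek k w].
Definition UH := \big[setU/set0]_(S <- enum {ffun 'I_n -> {set 'I_m}}) HS S.

Lemma W_eq : [set w | forall r, Yr r w < x r] =
  UH `|` (~` Gd `&` [set _ | forall r, 0 < x r]).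
Proof.
apply/seteqP; split => w.
  move=> /= hw; have [[k hk]|nk] := pselect (exists k, Ek k w).
    left; apply: (mem_bigU (i := [ffun r => cnt w r])); first by rewrite mem_enum.
    split => r.
      exists (k r); split; last exact: hk.
      by rewrite ffunE -order_stat_lt -(Yr_on r hk); exact: hw.
    move=> j; apply/BS_iff; rewrite ffunE /cnt inE //.
  right; split => // r; have := hw r; by rewrite Yr_off.
rewrite /UH => -[h|[nk hp]] r /=.
  have [S _ hS] := bigU_mem h.
  have [k [hk hkS]] := HS_Ek hS.
  rewrite (Yr_on r hk) order_stat_lt.
  by have := hkS r; rewrite (HS_cnt hS.2 r).
by rewrite Yr_off.
Qed.

Lemma cube_S (S : {ffun 'I_n -> {set 'I_m}}) :
  in_unit_cube (fun r => (#|S r|)%:R / m%:R : R).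
Proof.
move=> r; apply/andP; split; first exact: (gr_ge0 R hm).
apply: (gr_le1 R hm); apply: leq_trans (max_card _) _; by rewrite card_ord.
Qed.

Lemma PXA S : P [set w | forall r, AS S r (X r w)] =
  (C (fun r => (#|S r|)%:R / m%:R))%:E.
Proof.
rewrite -(hX (cube_S S)).
apply: (@meas_eq_null _ _ _ P _ _ Nl).
- exact: meas_XA.
- by apply: meas_forall => r; exact: meas_le.
- exact: Nl_null.
- move=> w hw; left => r; have [k [hk /andP[_ h2]]] := hw r.
  apply: (ltW (lt_le_trans h2 _)); rewrite (gr_le R hm); exact: hk.
- move=> w hw; have [hN|hN] := pselect (Nl w); first by right.
  left => r.
  have [k /andP[h1 h2]] : exists k : 'I_m, g k < X r w < g k.+1.
    by apply: floor_ex => // hb; apply: hN; exists r.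
  exists k; split; last by rewrite h1 h2.
  rewrite ltnNge; apply/negP => hk.
  have := le_lt_trans (eq_ind _ is_true hk _ (esym (gr_le R hm _ _))) h1.
  by rewrite ltNge hw.
Qed.

Hypothesis hU : forall r j (B : set R), measurable B ->
     P (Xs r j @^-1` B) = uniform_prob (@ltr01 R) B.
Hypothesis hI : forall (A : 'I_n -> set R) (B : 'I_n -> 'I_m -> set R),
     (forall r, measurable (A r)) -> (forall r j, measurable (B r j)) ->
     P ([set w | forall r, A r (X r w)] `&`
        [set w | forall r j, B r j (Xs r j w)])
     = (P [set w | forall r, A r (X r w)] *
        \prod_(r < n) \prod_(j < m) P (Xs r j @^-1` B r j))%E.

Lemma PB S r j : P (Xs r j @^-1` BS S r j) =
  (if j \in S r then x r else 1 - x r)%:E.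
Proof.
rewrite hU; last exact: meas_BS.
by rewrite /BS; case: ifP => _; [exact: unif_lt | exact: unif_ge].
Qed.

Lemma PHS S : P (HS S) = (C (fun r => (#|S r|)%:R / m%:R) *
   \prod_(r < n) \prod_(j < m) (if j \in S r then x r else 1 - x r))%:E.
Proof.
rewrite /HS (@hI (AS S) (BS S) (meas_AS S) (meas_BS S)) PXA.
under eq_bigr do under eq_bigr do rewrite PB.
under eq_bigr do rewrite prodEFin; rewrite prodEFin; by rewrite -EFinM.
Qed.

Lemma meas_Ek k : measurable (Ek k).
Proof.
apply: meas_forall => r.
have e : X r @^-1` `](k r)%:R / m%:R, (k r).+1%:R / m%:R[ =
  [set w | (k r)%:R / m%:R < X r w < (k r).+1%:R / m%:R].
  by apply/seteqP; split => w /=; rewrite in_itv.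
have := measurable_funPTI (X r) (measurable_itv `](k r)%:R / m%:R, (k r).+1%:R / m%:R[).
by rewrite e; move=> h; exact: h.
Qed.

Lemma meas_Gd : measurable Gd.
Proof. apply: meas_exists => k; exact: meas_Ek. Qed.

Lemma meas_UH : measurable UH.
Proof. by apply: bigsetU_measurable => S _; exact: meas_HS. Qed.

Lemma PW : P [set w | forall r, Yr r w < x r] = (\sum_(S <- enum {ffun 'I_n -> {set 'I_m}}) P (HS S))%E.
Proof.
rewrite W_eq.
have mQ : measurable [set _ : T | forall r, 0 < x r].
  have [hq|hq] := pselect (forall r, 0 < x r).
    have -> : [set _ : T | forall r, 0 < x r] = setT by apply/seteqP; split.
    exact: measurableT.
  have -> : [set _ : T | forall r, 0 < x r] = set0 by apply/seteqP; split.
  exact: measurable0.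
rewrite (@meas_eq_null _ _ _ P _ UH Nl).
- rewrite /UH meas_bigU //.
  + exact: enum_uniq.
  + exact: meas_HS.
  + exact: HS_disj.
- by apply: measurableU; [exact: meas_UH | apply: measurableI => //; apply: measurableC; exact: meas_Gd].
- exact: meas_UH.
- exact: Nl_null.
- move=> w [h|[h _]]; first by left.
  right; apply: contrapT => hN; apply: h; exact: Gd_full.
- by move=> w h; left; left.
Qed.

Lemma final : P [set w | forall r, Yr r w < x r] = (bernstein_copula m C x)%:E.
Proof.
rewrite PW.
under eq_bigr do rewrite PHS.
rewrite sumEFin; congr (_%:E).
pose Fb (i : {ffun 'I_n -> 'I_m.+1}) := C (fun r => (i r)%:R / m%:R) *
  \prod_(r < n) (x r ^+ i r * (1 - x r) ^+ (m - i r)).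
transitivity (\sum_(S <- enum {ffun 'I_n -> {set 'I_m}}) Fb (szS S)).
  apply: eq_bigr => S _; rewrite /Fb; congr (C _ * _).
    by apply/funext => r; rewrite szSE.
  by apply: eq_bigr => r _; rewrite prod_if szSE.
rewrite sum_sz /bernstein_copula; apply: eq_bigr => i _.
rewrite /Fb -mulrA -big_split /=; congr (_ * _).
by apply: eq_bigr => r _; rewrite /bern mulrC !mulrA.
Qed.

End Main.

Theorem mainTheorem9 (R : realType) (n m : nat) (C : ('I_n -> R) -> R)
  (d : measure_display) (T : measurableType d) (P : probability T R)
  (X : 'I_n -> {RV P >-> R}) (Xs : 'I_n -> 'I_m -> {RV P >-> R}) :
  (2 <= n)%N -> (1 <= m)%N ->
  is_copula C ->
  (* (X_1,...,X_n) has joint distribution function C *)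
  (forall x : 'I_n -> R, in_unit_cube x ->
     P [set w | forall r, X r w <= x r] = (C x)%:E) ->
  (* each X_r^j is uniform on [0,1] *)
  (forall r j (B : set R), measurable B ->
     P (Xs r j @^-1` B) = uniform_prob (@ltr01 R) B) ->
  (* mutual independence of the vector (X_1,...,X_n) and all the X_r^j *)
  (forall (A : 'I_n -> set R) (B : 'I_n -> 'I_m -> set R),
     (forall r, measurable (A r)) -> (forall r j, measurable (B r j)) ->
     P ([set w | forall r, A r (X r w)] `&`
        [set w | forall r j, B r j (Xs r j w)])
     = (P [set w | forall r, A r (X r w)] *
        \prod_(r < n) \prod_(j < m) P (Xs r j @^-1` B r j))%E) ->
  let E (k : {ffun 'I_n -> 'I_m}) :=
    [set w | forall r, (k r)%:R / m%:R < X r w < (k r).+1%:R / m%:R] in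
  let Y (r : 'I_n) (w : T) :=
    \sum_(k : {ffun 'I_n -> 'I_m})
      (\1_(E k) w) * order_stat (fun j => Xs r j w) (k r) in
  forall x : 'I_n -> R, in_unit_cube x ->
    P [set w | forall r, Y r w < x r] = (bernstein_copula m C x)%:E.
Proof.
move=> hn hm hC hX hU hI E Y x hx.
exact: (final hn hm hC hX hx hU hI).
Qed.
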